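(* In the setting described in the context, the mapping $\psi^b$ is a monotone $(1-\min\{2\beta,1/2\})$-CRS with regards to $h$.
   Context: Let $I=\{1,\dots,n\}$ be a set of items, $B$ a positive integer, $[B]=\{1,\dots,B\}$, $[0;B]=\{0,1,\dots,B\}$; for $u,w\in[0;B]^I$, $u\le w$ means coordinatewise. Let $f:[0;B]^I\to\mathbb{R}_{\ge0}$ be monotone and lattice submodular. Each item $i$ has a random state $\Phi(i)\in[B]$, independent across items, with known distribution $p_i(s)=\Pr[\Phi(i)=s]$. Item $i$ in state $s$ has a nonnegative integer cost $c_i(s)$, with $c_i(s)\ge c_i(s')$ whenever $s\ge s'$. $C$ is a positive integer budget and $\mathcal{I}^{out}\subseteq 2^I$ is a downward-closed family. For $S\subseteq I$ and a realization $\phi\in[B]^I$, $\phi_S\in[0;B]^I$ equals $\phi(i)$ for $i\in S$ and $0$ otherwise; $\overline{f}(S)=\mathbb{E}[f(\Phi_S)]$, and $F(\overline{x})=\sum_{U\subseteq I}\prod_{i\in U}\overline{x}(i)\prod_{i\notin U}(1-\overline{x}(i))\overline{f}(U)$. Let $P_{\mathcal{I}^{out}}=\mathrm{conv}\{\mathbf{1}_S: S\in\mathcal{I}^{out}\}$. A monotone $(\beta,\gamma)$-balanced CRS for $\mathcal{I}^{out}$ is a (possibly randomized) scheme that, for any $\overline{z}\in\beta\cdot P_{\mathcal{I}^{out}}$ and the random set $R$ containing each $i$ independently with probability $\overline{z}(i)$, maps $R$ to $\chi(R)\subseteq R$ with $\chi(R)\in\mathcal{I}^{out}$, such that $\Pr[i\in\chi(R)\mid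 i\in R]\ge\gamma$ for all $i$, and for $i\in R\subseteq R'$, $\Pr[i\in\chi(R)]\ge\Pr[i\in\chi(R')]$. Assume such a scheme exists for given $\beta,\gamma\in[0,1]$. Problem P1: variables $x(i,t)\ge0$ for $i\in I$, $t\in\{1,\dots,C-c_i(B)\}$, with $\overline{x}(i)=\sum_{t=1}^{C-c_i(B)}x(i,t)$; maximize $F(\overline{x})$ subject to $\overline{x}(i)\le1$, $\overline{x}\in P_{\mathcal{I}^{out}}$, and for all $t\in\{1,\dots,C\}$: $\sum_{i\in I}\mathbb{E}[\min\{c_i(\Phi(i)),t\}]\sum_{t'=1}^{t}x(i,t')\le 2t$. Let $y$ be the solution of P1 computed by the stochastic continuous greedy algorithm of Asadpour and Nazerzadeh (2016) with stopping time $l=\min\{\beta,1/4\}$ and step size $\delta=o(n^{-3})$, with $\overline{y}(i)=\sum_t y(i,t)$. Distribution $h$: the random vector $v\in[0;B]^I$ has independent coordinates with $\Pr[v(i)=j]=p_i(j)\overline{y}(i)$ for $j\in[B]$ and $\Pr[v(i)=0]=1-\overline{y}(i)$. Let $R(v)=\{i: v(i)\ne0\}$. Mapping $\psi^b$: for each $i\in R(v)$ independently sample a starting time $t(i)\in\{1,\dots,C-c_i(B)\}$ with $\Pr[t(i)=t]=y(i,t)/\overline{y}(i)$. Set $\psi^b(v)(i)=0$ for $i\notin R(v)$; for $i\in R(v)$ set $\psi^b(v)(i)=v(i)$ if $\sum_{i'\in R(v)\setminus\{i\},\ t(i')\le t(i)}c_{i'}(v(i'))\le t(i)$, and $\psi^b(v)(i)=0$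 otherwise. An $\alpha$-CRS with regards to $h$ is a (possibly randomized) mapping $\psi$ on $[0;B]^I$ with $\psi(v)(i)\in\{0,v(i)\}$ for all $i$, and $\Pr[\psi(v)(i)=j\mid v(i)=j]\ge\alpha$ for all $i\in I$, $j\in[B]$ (probability over $v\sim h$ and the randomness of $\psi$). It is monotone if for all $u,w$ with $u(i)=w(i)$ and $u\le w$, $\Pr[\psi(u)(i)=u(i)]\ge\Pr[\psi(w)(i)=w(i)]$ (probability over the randomness of $\psi$ only). *)

(* Defs.v *)
From mathcomp Require Import all_boot all_order all_algebra.
Set Implicit Arguments. Unset Strict Implicit. Unset Printing Implicit Defensive.
Import Order.TTheory GRing.Theory Num.Theory.
Local Open Scope ring_scope.

(* Items: 'I_n.  States [0;B]: 'I_B.+1 (state 0 = "absent").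
   Times {0,...,C}: 'I_C.+1 ; the LP variables x(i,t) live on t in
   {1,...,C - c_i(B)} and are represented as zero elsewhere. *)

Section Defs.
Variables (R : realFieldType) (n B C : nat).

Definition vec := {ffun 'I_n -> 'I_B.+1}.
Definition times := {ffun 'I_n -> 'I_C.+1}.

Definition xbar (x : 'I_n -> 'I_C.+1 -> R) (i : 'I_n) : R :=
  \sum_(t < C.+1) x i t.

Definition Emin (p : 'I_n -> 'I_B.+1 -> R) (c : 'I_n -> 'I_B.+1 -> nat)
  (i : 'I_n) (t : nat) : R :=
  \sum_(s < B.+1 | (0 < s)%N) p i s * (minn (c i s) t)%:R.

Definition in_conv (Iout : {set {set 'I_n}}) (z : 'I_n -> R) : Prop :=
  exists lam : {set 'I_n} -> R,
    [/\ forall S, 0 <= lam S,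
        \sum_S lam S = 1,
        forall S, lam S != 0 -> S \in Iout &
        forall i, z i = \sum_S lam S * (i \in S)%:R].

Definition down_closed (Iout : {set {set 'I_n}}) : Prop :=
  forall S T : {set 'I_n}, T \subset S -> S \in Iout -> T \in Iout.

Definition in_P1 (p : 'I_n -> 'I_B.+1 -> R) (c : 'I_n -> 'I_B.+1 -> nat)
  (Iout : {set {set 'I_n}}) (x : 'I_n -> 'I_C.+1 -> R) : Prop :=
  [/\ forall i t, 0 <= x i t,
      forall i (t : 'I_C.+1),
        ((t : nat) == 0%N) || (C - c i ord_max < t)%N -> x i t = 0,
      forall i, xbar x i <= 1,
      in_conv Iout (xbar x) &
      forall t : nat, (1 <= t <= C)%N ->
        \sum_i Emin p c i t * (\sum_(t' < C.+1 | (t' <= t)%N) x i t')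
          <= 2 * t%:R].

Definition rprob (z : 'I_n -> R) (Rs : {set 'I_n}) : R :=
  \prod_i (if i \in Rs then z i else 1 - z i).

(* Monotone (beta,gamma)-balanced CRS for Iout; the (randomized) scheme is
   given by chi z Rs S = Pr[chi(Rs) = S] for the point z. *)
Definition balanced_CRS (Iout : {set {set 'I_n}}) (beta gamma : R) : Prop :=
  exists chi : ('I_n -> R) -> {set 'I_n} -> {set 'I_n} -> R,
    forall z : 'I_n -> R,
      (exists x, in_conv Iout x /\ forall i, z i = beta * x i) ->
      [/\ forall Rs S, 0 <= chi z Rs S,
          forall Rs, \sum_S chi z Rs S = 1,
          forall Rs S, chi z Rs S != 0 -> S \subset Rs /\ S \in Iout,
          (* Pr[i in chi(R) | i in R] >= gamma *)
          forall i, gamma * z i <=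
             \sum_Rs rprob z Rs * (i \in Rs)%:R *
                     (\sum_S chi z Rs S * (i \in S)%:R) &
          forall i (Rs Rs' : {set 'I_n}), i \in Rs -> Rs \subset Rs' ->
             \sum_S chi z Rs' S * (i \in S)%:R <=
             \sum_S chi z Rs S * (i \in S)%:R].

Definition hprob (p : 'I_n -> 'I_B.+1 -> R) (y : 'I_n -> 'I_C.+1 -> R)
  (v : vec) : R :=
  \prod_i (if (v i : nat) == 0%N then 1 - xbar y i else p i (v i) * xbar y i).

(* Distribution of the starting times given v: for i in R(v), t(i) = t with
   probability y(i,t)/ybar(i); items outside R(v) get the dummy time 0. *)
Definition tprob (y : 'I_n -> 'I_C.+1 -> R) (v : vec) (t : times) : R :=
  \prod_i (if (v i : nat) != 0%N then y i (t i) / xbar y i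
           else ((t i : nat) == 0%N)%:R).

Definition psib_det (c : 'I_n -> 'I_B.+1 -> nat) (v : vec) (t : times) : vec :=
  [ffun i => if ((v i : nat) != 0%N) &&
               (\sum_(i' | (i' != i) && ((v i' : nat) != 0%N) && (t i' <= t i)%N)
                   c i' (v i') <= t i)%N
             then v i else ord0].

(* psi^b as a randomized mapping: K v o = Pr[psi^b(v) = o] *)
Definition psib (c : 'I_n -> 'I_B.+1 -> nat) (y : 'I_n -> 'I_C.+1 -> R)
  (v o : vec) : R :=
  \sum_(t : times) tprob y v t * (psib_det c v t == o)%:R.

Definition is_CRS (h : vec -> R) (K : vec -> vec -> R) (alpha : R) : Prop :=
  [/\ forall v, h v != 0 -> (forall o, 0 <= K v o) /\ \sum_o K v o = 1,
      forall v o, K v o != 0 -> forall i, o i = ord0 \/ o i = v i &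
      (* Pr[psi(v)(i) = j | v(i) = j] >= alpha, written multiplicatively *)
      forall i (j : 'I_B.+1), (0 < j)%N ->
        alpha * (\sum_v h v * (v i == j)%:R) <=
        \sum_v \sum_o h v * K v o * ((o i == j) && (v i == j))%:R].

Definition monotone_CRS (K : vec -> vec -> R) : Prop :=
  forall (u w : vec) (i : 'I_n),
    (forall k, (u k <= w k)%N) -> u i = w i ->
    \sum_o K w o * (o i == w i)%:R <= \sum_o K u o * (o i == u i)%:R.

End Defs.

(* Main.v *)
Require Import Defs.
From mathcomp Require Import all_boot all_order all_algebra.
From mathcomp Require Import ring lra zify.
Set Implicit Arguments. Unset Strict Implicit. Unset Printing Implicit Defensive.
Import Order.TTheory GRing.Theory Num.Theory.
Local Open Scope ring_scope.


Section Gen.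
Variable R : realFieldType.

Lemma Eprod (I J : finType) (g : I -> J -> R) :
  \sum_(f : {ffun I -> J}) \prod_k g k (f k) = \prod_k \sum_a g k a.
Proof. by rewrite bigA_distr_bigA. Qed.

Lemma sum_ind (J : finType) (w : J -> R) (a : J) :
  \sum_b w b * (b == a)%:R = w a.
Proof.
rewrite (bigD1 a) //= eqxx mulr1 big1 ?addr0 // => b /negbTE ->; by rewrite mulr0.
Qed.

Lemma marg (I J : finType) (S : {set I}) (d : J) (w : I -> J -> R)
  (F : {ffun I -> J} -> R) :
  (forall k, k \notin S -> \sum_a w k a = 1) ->
  (forall f g : {ffun I -> J}, (forall k, k \in S -> f k = g k) -> F f = F g) ->
  \sum_(f : {ffun I -> J}) (\prod_k w k (f k)) * F f =
  \sum_(g : {ffun I -> J}) F g * \prod_k (if k \in S then w k (g k) else (g k == d)%:R).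
Proof.
move=> Hw HF.
pose ind (g : {ffun I -> J}) k (a : J) : R :=
  if k \in S then (a == g k)%:R else (g k == d)%:R.
have E f : F f = \sum_g F g * \prod_k ind g k (f k).
  pose pf := [ffun k => if k \in S then f k else d].
  rewrite (bigD1 pf) //=.
  have -> : \prod_k ind pf k (f k) = 1.
    by apply: big1 => k _; rewrite /ind /pf ffunE; case: ifP => kS; rewrite ?kS eqxx.
  rewrite mulr1 big1 ?addr0; first by apply: HF => k kS; rewrite /pf ffunE kS.
  move=> g ngp.
  have [k Hk] : exists k, g k != pf k.
    apply/existsP; apply: contraR ngp => /existsPn H; apply/eqP/ffunP => k.
    by apply/eqP; move: (H k); rewrite negbK.
  rewrite (bigD1 k) //= /ind.
  move: Hk; rewrite /pf ffunE; case: ifP => kS Hk.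
    by rewrite eq_sym (negbTE Hk) mul0r mulr0.
  by rewrite (negbTE Hk) mul0r mulr0.
under eq_bigr => f _ do rewrite E mulr_sumr.
rewrite exchange_big /=; apply: eq_bigr => g _.
under eq_bigr => f _ do rewrite mulrCA -big_split /=.
rewrite -[LHS]mulr_sumr (Eprod (fun k a => w k a * ind g k a)); congr (_ * _); apply: eq_bigr => k _.
rewrite /ind; case: ifP => kS; first by rewrite sum_ind.
by rewrite -mulr_suml Hw ?kS // mul1r.
Qed.

Lemma E2 (I J : finType) (w : I -> J -> R) (i i' : I) (G : J -> J -> R) :
  i != i' -> (forall k, \sum_a w k a = 1) ->
  \sum_(f : {ffun I -> J}) (\prod_k w k (f k)) * G (f i) (f i') =
  \sum_a \sum_b w i a * w i' b * G a b.
Proof.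
move=> nii Hw.
pose ind a b k (c : J) : R :=
  if k == i then (c == a)%:R else if k == i' then (c == b)%:R else 1.
have E f : G (f i) (f i') = \sum_a \sum_b G a b * \prod_k ind a b k (f k).
  have P a b : \prod_k ind a b k (f k) = ((f i == a) && (f i' == b))%:R.
    rewrite (bigD1 i) //= (bigD1 i') 1?eq_sym //= big1; last first.
      by move=> k /andP[/negbTE ki /negbTE ki']; rewrite /ind ki ki'.
    by rewrite /ind eqxx (eq_sym i') (negbTE nii) eqxx mulr1 -natrM mulnb (eq_sym (f i)).
  under eq_bigr => a _ do under eq_bigr => b _ do rewrite P.
  rewrite (bigD1 (f i)) //= [X in _ + X]big1 ?addr0; last first.
    move=> a /negbTE Ha; apply: big1 => b _.
    by rewrite eq_sym Ha /= mulr0.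
  rewrite (bigD1 (f i')) //= big1 ?addr0; last first.
    by move=> b /negbTE Hb; rewrite eqxx eq_sym Hb mulr0.
  by rewrite !eqxx mulr1.
under eq_bigr => f _ do rewrite E mulr_sumr.
rewrite exchange_big /=; apply: eq_bigr => a _.
under eq_bigr => f _ do rewrite mulr_sumr.
rewrite exchange_big /=; apply: eq_bigr => b _.
under eq_bigr => f _ do rewrite mulrCA -big_split /=.
rewrite -[LHS]mulr_sumr (Eprod (fun k c => w k c * ind a b k c)) mulrC; congr (_ * _).
rewrite (bigD1 i) //= (bigD1 i') 1?eq_sym //= [X in _ * (_ * X)]big1; last first.
  move=> k /andP[/negbTE ki /negbTE ki']; rewrite /ind ki ki'.
  by under eq_bigr => c _ do rewrite mulr1; rewrite Hw.
by rewrite /ind eqxx (eq_sym i') (negbTE nii) eqxx mulr1 !sum_ind.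
Qed.

Lemma E1 (I J : finType) (w : I -> J -> R) (i : I) (G : J -> R) :
  (forall k, \sum_a w k a = 1) ->
  \sum_(f : {ffun I -> J}) (\prod_k w k (f k)) * G (f i) = \sum_a w i a * G a.
Proof.
move=> Hw.
pose ind a k (c : J) : R := if k == i then (c == a)%:R else 1.
have E f : G (f i) = \sum_a G a * \prod_k ind a k (f k).
  have P a : \prod_k ind a k (f k) = (f i == a)%:R.
    rewrite (bigD1 i) //= big1; last by move=> k /negbTE ki; rewrite /ind ki.
    by rewrite /ind eqxx mulr1.
  under eq_bigr => a _ do rewrite P.
  rewrite (bigD1 (f i)) //= big1 ?addr0; last first.
    by move=> a /negbTE Ha; rewrite eq_sym Ha mulr0.
  by rewrite eqxx mulr1.
under eq_bigr => f _ do rewrite E mulr_sumr.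
rewrite exchange_big /=; apply: eq_bigr => a _.
under eq_bigr => f _ do rewrite mulrCA -big_split /=.
rewrite -[LHS]mulr_sumr (Eprod (fun k c => w k c * ind a k c)) mulrC; congr (_ * _).
rewrite (bigD1 i) //= [X in _ * X]big1; last first.
  move=> k /negbTE ki; rewrite /ind ki.
  by under eq_bigr => c _ do rewrite mulr1; rewrite Hw.
by rewrite /ind eqxx mulr1 sum_ind.
Qed.

Lemma pairconv (I J1 J2 : finType) (F : {ffun I -> J1} -> {ffun I -> J2} -> R) :
  \sum_(v : {ffun I -> J1}) \sum_(t : {ffun I -> J2}) F v t =
  \sum_(f : {ffun I -> J1 * J2}) F [ffun k => (f k).1] [ffun k => (f k).2].
Proof.
rewrite pair_bigA /=.
pose h (f : {ffun I -> J1 * J2}) := ([ffun k => (f k).1], [ffun k => (f k).2]).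
pose h' (p : {ffun I -> J1} * {ffun I -> J2}) := [ffun k => (p.1 k, p.2 k)].
rewrite (reindex h) /=; last first.
  apply: onW_bij; exists h'.
    by move=> f; apply/ffunP => k; rewrite /h /h' /= !ffunE -surjective_pairing.
  by move=> [v t]; rewrite /h /h' /=; congr (_, _); apply/ffunP => k; rewrite !ffunE.
by [].
Qed.

End Gen.


Lemma sum_nat0 (R : realFieldType) (C : nat) :
  \sum_(a < C.+1) (((a : nat) == 0%N)%:R : R) = 1.
Proof. by rewrite big_ord_recl /= big1 ?addr0. Qed.

Lemma sum_col (R : realFieldType) (T U : finType) (a : T -> R) (d : T -> U) (X : U -> R) :
  \sum_o (\sum_t a t * (d t == o)%:R) * X o = \sum_t a t * X (d t).
Proof.
under eq_bigr => o _ do rewrite mulr_suml.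
rewrite exchange_big /=; apply: eq_bigr => t _.
rewrite (bigD1 (d t)) //= eqxx mulr1 big1 ?addr0 // => o /negbTE.
by rewrite eq_sym => ->; rewrite mulr0 mul0r.
Qed.

Lemma ler_b (R : realFieldType) (b1 b2 : bool) : (b1 -> b2) -> (b1%:R : R) <= b2%:R.
Proof. by case: b1; case: b2 => // /(_ isT). Qed.

Lemma minn_sum (I : finType) (P : pred I) (c : I -> nat) t :
  (minn (\sum_(k | P k) c k) t <= \sum_(k | P k) minn (c k) t)%N.
Proof.
apply: (big_ind2 (fun a b => minn a t <= b)%N) => //.
- by rewrite min0n.
- move=> a1 b1 a2 b2 h1 h2; apply: leq_trans (leq_add h1 h2).
  rewrite /minn; case: ifP; case: ifP; case: ifP; lia.
Qed.

Lemma minmin (R : realFieldType) (beta : R) : 0 <= beta ->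
  Num.min (2 * beta) (1/2) = 2 * Num.min beta (1/4).
Proof.
move=> hb; rewrite /Order.min; case: ifP => h1; case: ifP => h2; lra.
Qed.

Lemma sum_eq1 (R : realFieldType) (U : finType) (d : U) :
  \sum_o ((d == o)%:R : R) = 1.
Proof.
rewrite (bigD1 d) //= eqxx big1 ?addr0 // => o /negbTE.
by rewrite eq_sym => ->.
Qed.

Lemma Zv (R : realFieldType) (C : nat) (b : bool) (yk : 'I_C.+1 -> R) (X : R) :
  \sum_a (if b then yk a / X else (((a : nat) == 0%N)%:R : R)) =
  if b then (\sum_a yk a) / X else 1.
Proof. by case: b; [rewrite mulr_suml | exact: sum_nat0]. Qed.


Theorem lemma4 (R : realFieldType) (n B C : nat)
  (p : 'I_n -> 'I_B.+1 -> R) (c : 'I_n -> 'I_B.+1 -> nat)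
  (Iout : {set {set 'I_n}}) (beta gamma : R)
  (y : 'I_n -> 'I_C.+1 -> R) :
  (0 < B)%N -> (0 < C)%N ->
  (forall i (s : 'I_B.+1), (0 < s)%N -> 0 <= p i s) ->
  (forall i, \sum_(s < B.+1 | (0 < s)%N) p i s = 1) ->
  (forall i (s s' : 'I_B.+1), (0 < s')%N -> (s' <= s)%N -> (c i s' <= c i s)%N) ->
  down_closed Iout ->
  0 <= beta <= 1 -> 0 <= gamma <= 1 ->
  balanced_CRS Iout beta gamma ->
  (exists x, in_P1 p c Iout x /\
     forall i t, y i t = Num.min beta (1 / 4) * x i t) ->
  is_CRS (hprob p y) (psib c y) (1 - Num.min (2 * beta) (1 / 2)) /\
  monotone_CRS (psib c y).
Proof.
move=> HB HC Hp Hpsum Hc Hdown /andP[hb0 hb1] Hg Hcrs [x [[Hx0 Hxz Hxb1 Hconv Hsum] Hy]].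
rewrite (minmin hb0).
set l := Num.min beta (1/4).
have l0 : 0 <= l by rewrite /l /Order.min; case: ifP; lra.
have l14 : l <= 1/4 by rewrite /l /Order.min; case: ifP; lra.
have y0 k t : 0 <= y k t by rewrite Hy mulr_ge0.
have yz k : y k ord0 = 0 by rewrite Hy Hxz ?mulr0.
have xbE k : xbar y k = l * xbar x k.
  by rewrite /xbar mulr_sumr; apply: eq_bigr => t _; exact: Hy.
have xbx0 k : 0 <= xbar x k by apply: sumr_ge0 => t _.
have xb0 k : 0 <= xbar y k by apply: sumr_ge0 => t _.
have xb1 k : xbar y k <= 1/4 by rewrite xbE; have := Hxb1 k; have := xbx0 k; nra.
have yxb0 k : xbar y k = 0 -> forall t, y k t = 0.
  by move=> /psumr_eq0P H t; apply: H.
have sumyd k : \sum_a y k a / xbar y k = (xbar y k != 0)%:R.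
  rewrite -mulr_suml; case: eqP => [->|/eqP h]; first by rewrite invr0 mulr0.
  by rewrite divff.
have sumyd2 k : (\sum_a y k a) / xbar y k = (xbar y k != 0)%:R.
  by rewrite mulr_suml sumyd.
have tprob0 (v : vec n B) t : 0 <= tprob y v t.
  apply: prodr_ge0 => k _; case: ifP => _; last by rewrite ler0n.
  by rewrite divr_ge0.
split.
  split.
  - move=> v hv; split.
      by move=> o; apply: sumr_ge0 => t _; rewrite mulr_ge0 ?ler0n.
    rewrite /psib exchange_big /=.
    under eq_bigr => t _ do rewrite -mulr_sumr sum_eq1 mulr1.
    rewrite /tprob (Eprod (fun k a => if (v k : nat) != 0%N then y k a / xbar y k
           else ((a : nat) == 0%N)%:R)).
    apply: big1 => k _ /=; case hvk: ((v k : nat) != 0%N); last exact: sum_nat0.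
    rewrite sumyd; move/prodf_neq0: hv => /(_ k isT).
    rewrite ifN; last by rewrite hvk.
    by rewrite mulf_eq0 negb_or => /andP[_ ->].
  - move=> v o Hne k.
    have [t Ht] : exists t : times n C, psib_det c v t == o.
      apply/existsP; apply: contraR Hne => /existsPn H.
      by apply/eqP/big1 => t _; rewrite (negbTE (H t)) mulr0.
    have {}Ht := Ht.
    move/eqP: Ht => <-; rewrite ffunE; case: ifP => _; [right|left] => //.
  - move=> i j hj.
    have hj0 : (j : nat) != 0%N by rewrite -lt0n.
    pose q k (s : 'I_B.+1) (tau : 'I_C.+1) : R := if (s : nat) == 0%N
      then (1 - xbar y k) * ((tau : nat) == 0%N)%:R else p k s * y k tau.
    pose Q k (a : 'I_B.+1 * 'I_C.+1) := q k a.1 a.2.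
    have q0 k a : 0 <= Q k a.
      rewrite /Q /q; case: ifP => hs.
        by rewrite mulr_ge0 ?ler0n //; have := xb1 k; lra.
      by rewrite mulr_ge0 // Hp // lt0n hs.
    pose hf k (s : 'I_B.+1) : R :=
      if (s : nat) == 0%N then 1 - xbar y k else p k s * xbar y k.
    have hsum k : \sum_s hf k s = 1.
      rewrite big_ord_recl /hf /= -mulr_suml.
      have := Hpsum k; rewrite big_mkcond big_ord_recl /= add0r => ->.
      by rewrite mul1r subrK.
    have hQ1 k : \sum_a Q k a = 1.
      rewrite /Q -pair_bigA /= -[RHS](hsum k); apply: eq_bigr => s _.
      rewrite /q /hf; case: ifP => _; rewrite -mulr_sumr ?sum_nat0 ?mulr1 //.
    have Hhq (v : vec n B) (t : times n C) :
        hprob p y v * tprob y v t = \prod_k q k (v k) (t k).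
      rewrite /hprob /tprob -big_split /=; apply: eq_bigr => k _; rewrite /q.
      case hv: ((v k : nat) == 0%N) => /=; first by [].
      case: (eqVneq (xbar y k) 0) => hx.
        by rewrite (yxb0 k hx) hx !(mulr0, mul0r).
      by field.
    have LHS_E : \sum_v hprob p y v * (v i == j)%:R = p i j * xbar y i.
      transitivity (\sum_(v : vec n B)
          \prod_k (hf k (v k) * (if k == i then (v k == j)%:R else 1))).
        apply: eq_bigr => v _; rewrite big_split /=; congr (_ * _).
        by rewrite (bigD1 i) //= eqxx big1 ?mulr1 // => k /negbTE ->.
      rewrite (Eprod (fun k s => hf k s * (if k == i then (s == j)%:R else 1))).
      rewrite (bigD1 i) //= [X in _ * X]big1 ?mulr1; last first.
        by move=> k /negbTE ki; rewrite ki; under eq_bigr => s _ do rewrite mulr1.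
      by rewrite eqxx sum_ind /hf (negbTE hj0).
    have RHS_E : \sum_v \sum_o hprob p y v * psib c y v o * ((o i == j) && (v i == j))%:R
      = \sum_(f : {ffun 'I_n -> 'I_B.+1 * 'I_C.+1}) (\prod_k Q k (f k)) *
          ((psib_det c [ffun k => (f k).1] [ffun k => (f k).2] i == j)
            && ([ffun k => (f k).1] i == j))%:R.
      transitivity (\sum_(v : vec n B) \sum_(t : times n C) hprob p y v * tprob y v t *
          ((psib_det c v t i == j) && (v i == j))%:R).
        apply: eq_bigr => v _.
        under eq_bigr => o _ do rewrite -mulrA.
        rewrite -mulr_sumr (sum_col (fun t => tprob y v t) (psib_det c v)
            (fun o => ((o i == j) && (v i == j))%:R)) mulr_sumr.
        by apply: eq_bigr => t _; rewrite mulrA.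
      rewrite (pairconv (fun (v : vec n B) (t : times n C) => hprob p y v * tprob y v t *
          ((psib_det c v t i == j) && (v i == j))%:R)).
      apply: eq_bigr => f _; rewrite Hhq; congr (_ * _).
      by apply: eq_bigr => k _; rewrite /Q !ffunE.
    rewrite LHS_E RHS_E.
    have P3 : \sum_a Q i a * (a.1 == j)%:R = p i j * xbar y i.
      rewrite /Q -(pair_bigA _ (fun s t => q i s t * (s == j)%:R)) /=.
      under eq_bigr => s _ do rewrite -mulr_suml.
      by rewrite sum_ind /q (negbTE hj0) -mulr_sumr.
    have P2 : \sum_(f : {ffun 'I_n -> 'I_B.+1 * 'I_C.+1}) (\prod_k Q k (f k)) *
        ((f i).1 == j)%:R = p i j * xbar y i.
      by rewrite (@E1 R _ _ Q i (fun a => (a.1 == j)%:R)) //.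
    have Wt0 (f : {ffun 'I_n -> 'I_B.+1 * 'I_C.+1}) : 0 <= \prod_k Q k (f k).
      by apply: prodr_ge0 => k _.
    pose G i' (a b : 'I_B.+1 * 'I_C.+1) : R := (a.1 == j)%:R *
      ((((b.1 : nat) != 0%N) && (b.2 <= a.2)%N)%:R * (minn (c i' b.1) a.2)%:R
        / (a.2 : nat)%:R).
    have G0 i' a b : 0 <= G i' a b.
      by rewrite /G mulr_ge0 ?ler0n // divr_ge0 ?ler0n // mulr_ge0 ?ler0n.
    have PD (f : {ffun 'I_n -> 'I_B.+1 * 'I_C.+1}) :
      psib_det c [ffun k => (f k).1] [ffun k => (f k).2] i =
      if (((f i).1 : nat) != 0%N) && (\sum_(i' | (i' != i) && (((f i').1 : nat) != 0%N) &&
           ((f i').2 <= (f i).2)%N) c i' (f i').1 <= (f i).2)%N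
      then (f i).1 else ord0.
      rewrite ffunE !ffunE; congr (if _ then _ else _); congr (_ && (_ <= _)%N).
      by apply: eq_big => [i'|i' _]; rewrite ?ffunE.
    have fail_bd (f : {ffun 'I_n -> 'I_B.+1 * 'I_C.+1}) :
      (\prod_k Q k (f k)) *
        ((~~ (psib_det c [ffun k => (f k).1] [ffun k => (f k).2] i == j))
           && ((f i).1 == j))%:R
      <= (\prod_k Q k (f k)) * \sum_(i' | i' != i) G i' (f i) (f i').
      case: (eqVneq (\prod_k Q k (f k)) 0) => hW; first by rewrite hW !mul0r.
      apply: ler_wpM2l; first exact: Wt0.
      case: andP => [[hfail hfj]|_]; last by apply: sumr_ge0 => i' _.
      have hQi : Q i (f i) != 0 by move/prodf_neq0: hW => /(_ i isT).
      have htau : (0 < (f i).2)%N.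
        move: hQi; rewrite /Q /q (eqP hfj) (negbTE hj0) lt0n; apply: contra => h0.
        have -> : (f i).2 = ord0 by apply: val_inj; apply/eqP.
        by rewrite yz mulr0.
      move: hfail; rewrite PD (eqP hfj) hj0 /=.
      case: leqP => [_|hS _]; first by rewrite eqxx.
      set P := fun i' => (i' != i) && (((f i').1 : nat) != 0%N) && ((f i').2 <= (f i).2)%N.
      have hm := @minn_sum _ P (fun i' => c i' (f i').1) (f i).2.
      rewrite (minn_idPr (ltnW hS)) in hm.
      have GE : \sum_(i' | i' != i) G i' (f i) (f i') =
          (\sum_(i' | P i') minn (c i' (f i').1) (f i).2)%:R / ((f i).2 : nat)%:R.
        rewrite natr_sum mulr_suml.
        rewrite [RHS](eq_bigl (fun i' => (i' != i) && ((((f i').1 : nat) != 0%N) &&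
            ((f i').2 <= (f i).2)%N))); last by move=> i'; rewrite /P andbA.
        rewrite big_mkcondr /=; apply: eq_bigr => i' _.
        rewrite /G (eqP hfj) eqxx mul1r.
        by case: ifP => _; rewrite ?mul1r ?mul0r.
      by rewrite GE ler_pdivlMr ?ltr0n // mul1r ler_nat.
    have PI i' (tau : 'I_C.+1) : (0 < tau)%N ->
        \sum_b Q i' b * G i' (j, tau) b =
        l / (tau : nat)%:R * (Emin p c i' tau * \sum_(t' < C.+1 | (t' <= tau)%N) x i' t').
      move=> htau.
      transitivity (\sum_s' \sum_t' q i' s' t' * G i' (j, tau) (s', t'));
        first by rewrite pair_bigA.
      rewrite big_ord_recl /= big1 ?add0r; last first.
        by move=> t' _; rewrite /G /= !(mul0r, mulr0).
      rewrite /Emin [X in _ * (X * _)]big_mkcond [X in _ * (X * _)]big_ord_recl /= add0r mulr_suml mulr_sumr.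
      apply: eq_bigr => s' _.
      rewrite [X in _ * (_ * X)]big_mkcond /= !mulr_sumr; apply: eq_bigr => t' _.
      rewrite /G /q /= eqxx mul1r.
      case: ifP => _ /=; rewrite ?mulr0 ?mul0r ?mulr1 ?mul1r // Hy -/l ?mulr0 //.
      have : (tau : nat)%:R != 0 :> R by rewrite pnatr_eq0 -lt0n.
      by move=> h; field.
    have key : \sum_(f : {ffun 'I_n -> 'I_B.+1 * 'I_C.+1}) (\prod_k Q k (f k)) *
        ((~~ (psib_det c [ffun k => (f k).1] [ffun k => (f k).2] i == j))
           && ((f i).1 == j))%:R <= 2 * l * (p i j * xbar y i).
      apply: le_trans (ler_sum _ (fun f _ => fail_bd f)) _.
      under eq_bigr => f _ do rewrite mulr_sumr.
      rewrite exchange_big /=.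
      rewrite (eq_bigr (fun i' => \sum_a \sum_b Q i a * Q i' b * G i' a b)); last first.
        move=> i' hi'; apply: (@E2 R _ _ Q i i' (G i')) => //.
        by rewrite eq_sym.
      rewrite exchange_big /= -P3 mulr_sumr; apply: ler_sum => a _.
      under eq_bigr => i' _ do under eq_bigr => b _ do rewrite -mulrA.
      under eq_bigr => i' _ do rewrite -mulr_sumr.
      rewrite -mulr_sumr mulrCA.
      case: a => s tau /=.
      case: (eqVneq s j) => [->|hs]; last first.
        rewrite mulr0n !mulr0 big1 ?mulr0 // => i' _.
        by rewrite big1 // => b _; rewrite /G /= (negbTE hs) mul0r mulr0.
      case: (posnP tau) => htau.
        have -> : tau = ord0 by apply: val_inj.
        by rewrite /Q /q /= (negbTE hj0) yz !(mulr0, mul0r).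
      apply: ler_wpM2l; first exact: q0.
      rewrite mulr1n mulr1.
      apply: (@le_trans _ _ (\sum_i' \sum_b Q i' b * G i' (j, tau) b)).
        rewrite [X in _ <= X](bigD1 i) //= lerDr.
        by apply: sumr_ge0 => b _; rewrite mulr_ge0.
      rewrite (eq_bigr _ (fun i' _ => PI i' tau htau)) -mulr_sumr.
      have hle : (1 <= tau <= C)%N by rewrite htau -ltnS ltn_ord.
      apply: le_trans (ler_wpM2l _ (Hsum tau hle)) _.
        by rewrite divr_ge0 ?ler0n.
      have : (tau : nat)%:R != 0 :> R by rewrite pnatr_eq0 -lt0n.
      by move=> h; rewrite le_eqVlt; apply/orP; left; apply/eqP; field.
    have decomp : p i j * xbar y i =
      \sum_(f : {ffun 'I_n -> 'I_B.+1 * 'I_C.+1}) (\prod_k Q k (f k)) *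
          ((psib_det c [ffun k => (f k).1] [ffun k => (f k).2] i == j)
            && ([ffun k => (f k).1] i == j))%:R +
      \sum_(f : {ffun 'I_n -> 'I_B.+1 * 'I_C.+1}) (\prod_k Q k (f k)) *
        ((~~ (psib_det c [ffun k => (f k).1] [ffun k => (f k).2] i == j))
           && ((f i).1 == j))%:R.
      rewrite -P2 -big_split /=; apply: eq_bigr => f _; rewrite -mulrDr.
      have -> : [ffun k => (f k).1] i = (f i).1 by rewrite ffunE.
      congr (_ * _); case: (psib_det _ _ _ i == j); case: ((f i).1 == j); by rewrite /= ?addr0 ?add0r.
    move: key; rewrite decomp; set A := \sum_f _; set D := \sum_f _.
    have A0 : 0 <= A by apply: sumr_ge0 => f _; rewrite mulr_ge0.
    have D0 : 0 <= D by apply: sumr_ge0 => f _; rewrite mulr_ge0.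
    move=> key; nra.
move=> u w i Hle Heq.
have col (v : vec n B) (X : vec n B -> R) :
  \sum_o psib c y v o * X o = \sum_t tprob y v t * X (psib_det c v t).
  exact: sum_col.
rewrite !col.
have Zt (v : vec n B) : \sum_t tprob y v t =
   \prod_k (if (v k : nat) != 0%N then (xbar y k != 0)%:R else 1).
  rewrite /tprob (Eprod (fun k a => if (v k : nat) != 0%N then y k a / xbar y k
           else ((a : nat) == 0%N)%:R)).
  by apply: eq_bigr => k _; rewrite Zv; case: ifP => //; rewrite sumyd2.
have hwu k : (u k : nat) != 0%N -> (w k : nat) != 0%N.
  by have := Hle k; lia.
case: (eqVneq (w i : nat) 0%N) => hw.
  have E (v : vec n B) (t : times n C) : (v i : nat) = 0%N ->
      (psib_det c v t i == v i) = true.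
    by move=> h; rewrite ffunE h /=; apply/eqP/val_inj; rewrite /= h.
  under eq_bigr => t _ do rewrite E // mulr1.
  under [X in _ <= X]eq_bigr => t _ do rewrite E ?Heq // mulr1.
  rewrite !Zt; apply: ler_prod => k _.
  case huk: ((u k : nat) != 0%N); first by rewrite (hwu k) ?huk // ler0n lexx.
  by case: ifP => _; [case: (xbar y k != 0) |]; rewrite /= ?lexx ?ler01 ?ler0n.
have hu : (u i : nat) != 0%N by rewrite Heq.
case: (boolP [exists k, ((w k : nat) != 0%N) && (xbar y k == 0)]).
  move/existsP => [k /andP[hwk /eqP hxk]].
  rewrite big1; first by apply: sumr_ge0 => t _; rewrite mulr_ge0 ?ler0n.
  move=> t _; rewrite /tprob (bigD1 k) //= (negbTE hwk) hxk invr0.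
  by rewrite !mulr0 !mul0r.
move/existsPn => Hall.
pose F := fun t : times n C => ((psib_det c u t i == u i)%:R : R).
apply: (@le_trans _ _ (\sum_t tprob y w t * F t)).
  apply: ler_sum => t _; apply: ler_wpM2l; first exact: tprob0.
  apply: ler_b.
  rewrite /F !ffunE -Heq hu /=.
  case: ifP => h1; last by move/eqP => h; move: hu; rewrite -h eqxx.
  move=> _; rewrite (leq_trans _ h1) ?eqxx //.
  rewrite big_mkcond [X in (_ <= X)%N]big_mkcond /=; apply: leq_sum => k _.
  case: ifP => // /andP[/andP[hki huk] htk].
  rewrite hki (hwu k huk) htk /=.
  by apply: Hc; rewrite ?lt0n ?Hle.
pose S := [set k | (u k : nat) != 0%N].
have HF : forall f g : times n C, (forall k, k \in S -> f k = g k) -> F f = F g.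
  move=> f g hfg; rewrite /F !ffunE.
  have hi : f i = g i by apply: hfg; rewrite inE.
  rewrite hi; congr ((_ == _)%:R); congr (if _ then _ else _); congr (_ && _).
  congr (_ <= _)%N; apply: eq_bigl => k.
  case huk: ((u k : nat) != 0%N); rewrite ?andbF ?andbT //=.
  by rewrite hfg // inE huk.
have M1 : \sum_t tprob y w t * F t = \sum_g F g * \prod_k (if k \in S then
    (if (w k : nat) != 0%N then y k (g k) / xbar y k else ((g k : nat) == 0%N)%:R)
    else (g k == ord0)%:R).
  apply: (@marg R _ _ S ord0 (fun k a => if (w k : nat) != 0%N then y k a / xbar y k
           else ((a : nat) == 0%N)%:R) F) => //.
  move=> k _; rewrite Zv; case: ifP => // hwk; rewrite sumyd2.
  by move: (Hall k); rewrite hwk /= => ->.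
have M2 : \sum_t tprob y u t * F t = \sum_g F g * \prod_k (if k \in S then
    (if (u k : nat) != 0%N then y k (g k) / xbar y k else ((g k : nat) == 0%N)%:R)
    else (g k == ord0)%:R).
  apply: (@marg R _ _ S ord0 (fun k a => if (u k : nat) != 0%N then y k a / xbar y k
           else ((a : nat) == 0%N)%:R) F) => //.
  by move=> k; rewrite inE => /negbTE huk; rewrite Zv huk.
rewrite M1 M2 le_eqVlt; apply/orP; left; apply/eqP.
apply: eq_bigr => g _; congr (_ * _); apply: eq_bigr => k _.
case: ifP => //; rewrite inE => huk.
by rewrite huk (hwu k huk).
Qed.
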